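(* Let $\mathbb D=\{z\in\mathbb C:|z|<1\}$ and let $\mathcal P$ be the set of holomorphic functions $p$ on $\mathbb D$ with $\operatorname{Re} p(z)>0$ for all $z\in\mathbb D$ (no normalization $p(0)=1$ is imposed). For $p\in\mathcal P$ and $0<r<1$ set \[ I_p(r):=\int_0^{2\pi}\left|\frac{z p'(z)}{p(z)}\right|^2\,d\theta,\qquad z=re^{i\theta}. \] Then there exists a function $p_*\in\mathcal P$ such that for every real $\beta<2$, $I_{p_*}(r)\neq O\bigl((1-r)^{-\beta}\bigr)$ as $r\to1^-$.
   Context: $A(r)\ne O(B(r))$ as $r\to1^-$ means there is no constant $C$ with $A(r)\le C B(r)$ for all $r$ sufficiently close to $1$. *)

(* Defs.v *)
From Stdlib Require Import Reals.
From Coquelicot Require Import Coquelicot.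
Open Scope R_scope.

Definition in_disc (z : C) : Prop := Cmod z < 1.

Definition holo_on_disc_with (p dp : C -> C) : Prop :=
  forall z : C, in_disc z -> @is_derive C_AbsRing C_NormedModule p z (dp z).

Definition in_class_P (p : C -> C) : Prop :=
  (exists dp : C -> C, holo_on_disc_with p dp) /\
  (forall z : C, in_disc z -> 0 < Re (p z)).

Definition polar (r theta : R) : C := (r * cos theta, r * sin theta)%R.

Definition I_int (p dp : C -> C) (r : R) : R :=
  RInt (fun theta : R =>
          (Cmod (Cdiv (Cmult (polar r theta) (dp (polar r theta))) (p (polar r theta)))) ^ 2)
       0 (2 * PI).

Definition bigO_at_1minus (A B : R -> R) : Prop :=
  exists K : R, exists r0 : R, r0 < 1 /\
    forall r : R, r0 < r < 1 -> A r <= K * B r.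

(* Main.v *)
Require Import Defs.
From Stdlib Require Import Reals Lra Lia Psatz ZArith.
From Coquelicot Require Import Coquelicot.
Open Scope R_scope.

Fixpoint cp (z : C) (n : nat) : C :=
  match n with O => RtoC 1 | S m => Cmult z (cp z m) end.

Lemma Cmod_cp z n : Cmod (cp z n) = Cmod z ^ n.
Proof. induction n; simpl. apply Cmod_1. rewrite Cmod_mult, IHn; ring. Qed.

Lemma C_minus_eq (x y : C) : @minus C_AbelianGroup x y = Cminus x y.
Proof. reflexivity. Qed.
Lemma C_plus_eq (x y : C) : @plus C_AbelianGroup x y = Cplus x y.
Proof. reflexivity. Qed.
Lemma C_scal_eq (x y : C) : @scal C_Ring C_ModuleSpace x y = Cmult x y.
Proof. reflexivity. Qed.
Lemma C_norm_eq (x : C) : @norm C_AbsRing C_NormedModule x = Cmod x.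
Proof. reflexivity. Qed.

Lemma cp_diff_bound (z w : C) (rho : R) (n : nat) :
  1/2 <= rho -> Cmod z <= rho -> Cmod w <= rho ->
  Cmod (cp z (S n) - cp w (S n) - INR (S n) * cp w n * (z - w))%C
    <= 2 * INR (S n) ^ 2 * rho ^ n * Cmod (z - w) ^ 2.
Proof.
  intros Hr Hz Hw.
  assert (Hw' : forall m, Cmod (cp w m) <= rho ^ m).
  { intro m; rewrite Cmod_cp; apply pow_incr; split; [apply Cmod_ge_0|exact Hw]. }
  induction n.
  - simpl. replace (z * 1 - w * 1 - 1 * 1 * (z - w))%C with (RtoC 0) by ring.
    rewrite Cmod_0. pose proof (Cmod_ge_0 (z-w)). nra.
  - replace (cp z (S (S n)) - cp w (S (S n)) - INR (S (S n)) * cp w (S n) * (z - w))%C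
      with (z * (cp z (S n) - cp w (S n) - INR (S n) * cp w n * (z - w))
            + INR (S n) * cp w n * ((z - w) * (z-w)))%C.
    2:{ rewrite !S_INR. simpl. rewrite ?RtoC_plus. ring. }
    eapply Rle_trans. apply Cmod_triangle.
    rewrite !Cmod_mult, Cmod_R, (Rabs_right (INR (S n))) by (apply Rle_ge, pos_INR).
    pose proof (Cmod_ge_0 z). pose proof (Cmod_ge_0 (z-w)).
    pose proof (Cmod_ge_0 (cp z (S n) - cp w (S n) - INR (S n) * cp w n * (z - w))%C).
    pose proof (Hw' n). pose proof (pos_INR (S n)).
    assert (0 <= rho ^ n) by (apply pow_le; lra).
    assert (A1 : Cmod z * Cmod (cp z (S n) - cp w (S n) - INR (S n) * cp w n * (z - w))%C
       <= rho * (2 * INR (S n) ^ 2 * rho ^ n * Cmod (z - w) ^ 2)).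
    { apply Rmult_le_compat; auto. }
    assert (A2 : INR (S n) * Cmod (cp w n) * (Cmod (z - w) * Cmod (z - w))
       <= INR (S n) * (2 * rho * rho ^ n) * (Cmod (z - w) * Cmod (z - w))).
    { apply Rmult_le_compat_r. nra. apply Rmult_le_compat_l. lra. nra. }
    rewrite (S_INR (S n)).
    set (a := INR (S n)) in *. set (c := Cmod (z-w)) in *.
    set (q := rho ^ n) in *.
    replace (rho ^ S n) with (rho * q) by (unfold q; simpl; ring).
    assert (0 <= rho * q * c * c * (a + 1)) by (apply Rmult_le_pos; [|lra]; apply Rmult_le_pos; [|lra]; apply Rmult_le_pos; nra).
    nra.
Qed.

Definition CS (u : nat -> C) : C :=
  iota (fun l : C_CompleteNormedModule => is_series u l).

Lemma CS_correct u l : is_series u l -> CS u = l.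
Proof.
  intro H. unfold CS, is_series in *.
  apply (iota_filterlim_locally (K := C_AbsRing) (V := C_CompleteNormedModule) (F := eventually) (sum_n u)). all: try exact H.
Qed.

Lemma sum_n_norm (u : nat -> C) (b : nat -> R) N :
  (forall k, Cmod (u k) <= b k) -> Cmod (sum_n u N) <= sum_n b N.
Proof.
  intro H. induction N.
  - rewrite !sum_O. apply H.
  - rewrite !sum_Sn. eapply Rle_trans. apply Cmod_triangle.
    change (plus (sum_n b N) (b (S N))) with (sum_n b N + b (S N)).
    pose proof (H (S N)). lra.
Qed.

Lemma series_norm_le (u : nat -> C) (b : nat -> R) l L :
  is_series u l -> (forall k, Cmod (u k) <= b k) -> is_series b L -> Cmod l <= L.
Proof.
  intros Hu Hb HL.
  assert (H1 : is_lim_seq (fun N => Cmod (sum_n u N)) (Cmod l)).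
  { apply (filterlim_comp _ _ _ (sum_n u) Cmod eventually (locally l)).
    exact Hu. apply (filterlim_norm (K := C_AbsRing) (V := C_NormedModule) l). }
  assert (H2 : is_lim_seq (sum_n b) L) by exact HL.
  pose proof (is_lim_seq_le _ _ _ _ (fun N => sum_n_norm u b N Hb) H1 H2). exact H.
Qed.

Lemma ex_series_C (u : nat -> C) (b : nat -> R) :
  (forall k, Cmod (u k) <= b k) -> ex_series b -> exists l, is_series u l.
Proof.
  intros H Hb. apply (ex_series_le (K := C_AbsRing) (V := C_CompleteNormedModule) u b); auto.
Qed.

Lemma cp_diff_bound' (z w : C) (rho : R) (m : nat) :
  1/2 <= rho -> Cmod z <= rho -> Cmod w <= rho -> (1 <= m)%nat ->
  Cmod (cp z m - cp w m - INR m * cp w (pred m) * (z - w))%C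
    <= 4 * INR m ^ 2 * rho ^ m * Cmod (z - w) ^ 2.
Proof.
  intros Hr Hz Hw Hm. destruct m as [|n]. lia.
  eapply Rle_trans. apply cp_diff_bound with (rho := rho); auto.
  simpl pred. replace (rho ^ S n) with (rho * rho ^ n) by (simpl; ring).
  assert (0 <= rho ^ n) by (apply pow_le; lra).
  assert (0 <= INR (S n) ^ 2) by (apply pow_le, pos_INR).
  assert (0 <= Cmod (z - w) ^ 2) by (apply pow_le, Cmod_ge_0).
  assert (0 <= INR (S n) ^ 2 * rho ^ n * Cmod (z - w) ^ 2) by (apply Rmult_le_pos; [apply Rmult_le_pos|]; auto).
  nra.
Qed.

Section GD.
Variable c : nat -> R.
Variable m : nat -> nat.
Hypothesis Hm : forall k, (1 <= m k)%nat.
Hypothesis HB : forall rho, 0 <= rho < 1 -> exists B, forall k,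
  Rabs (c k) * INR (m k) ^ 2 * rho ^ (m k) <= B * (1/2) ^ k.

Definition term (z : C) (k : nat) : C := Cmult (RtoC (c k)) (cp z (m k)).
Definition dterm (z : C) (k : nat) : C :=
  Cmult (RtoC (c k * INR (m k))) (cp z (pred (m k))).
Definition GF (z : C) : C := CS (term z).
Definition GF' (z : C) : C := CS (dterm z).

Lemma geom_half : is_series (fun k => (1/2) ^ k) 2.
Proof.
  assert (H : is_series (fun k => (1/2) ^ k) (/ (1 - 1/2))).
  { apply is_series_geom. rewrite Rabs_right; lra. }
  replace (/ (1 - 1/2)) with 2 in H by field. exact H.
Qed.

Lemma geom_half_scal B : is_series (fun k => B * (1/2) ^ k) (B * 2).
Proof. apply (is_series_scal_l (K := R_AbsRing) (V := R_NormedModule)). apply geom_half. Qed.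

Lemma B_nonneg B rho : 0 <= rho -> (forall k, Rabs (c k) * INR (m k) ^ 2 * rho ^ (m k) <= B * (1/2) ^ k) -> 0 <= B.
Proof.
  intros Hr H. specialize (H O). simpl pow in H at 2.
  assert (0 <= Rabs (c 0%nat) * INR (m 0%nat) ^ 2 * rho ^ (m 0%nat)).
  { apply Rmult_le_pos. apply Rmult_le_pos. apply Rabs_pos. apply pow_le, pos_INR. apply pow_le; auto. }
  lra.
Qed.

Lemma INR_m_ge1 k : 1 <= INR (m k).
Proof. apply (le_INR 1). apply Hm. Qed.

Lemma term_bound z rho k : 0 <= rho -> Cmod z <= rho ->
  Cmod (term z k) <= Rabs (c k) * INR (m k) ^ 2 * rho ^ (m k).
Proof.
  intros H0 Hz. unfold term. rewrite Cmod_mult, Cmod_R, Cmod_cp.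
  pose proof (INR_m_ge1 k).
  assert (Cmod z ^ m k <= rho ^ m k) by (apply pow_incr; split; [apply Cmod_ge_0|auto]).
  assert (0 <= Cmod z ^ m k) by (apply pow_le, Cmod_ge_0).
  pose proof (Rabs_pos (c k)).
  assert (1 <= INR (m k) ^ 2) by nra.
  assert (0 <= rho ^ m k) by (apply pow_le; auto).
  assert (Rabs (c k) * Cmod z ^ m k <= Rabs (c k) * rho ^ m k) by (apply Rmult_le_compat_l; auto).
  assert (0 <= Rabs (c k) * rho ^ m k) by (apply Rmult_le_pos; auto).
  nra.
Qed.

Lemma dterm_bound z rho k : 1/2 <= rho -> Cmod z <= rho ->
  Cmod (dterm z k) <= 2 * (Rabs (c k) * INR (m k) ^ 2 * rho ^ (m k)).
Proof.
  intros H0 Hz. unfold dterm. rewrite Cmod_mult, Cmod_R, Cmod_cp.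
  pose proof (INR_m_ge1 k).
  rewrite Rabs_mult, (Rabs_right (INR (m k))) by lra.
  assert (Cmod z ^ pred (m k) <= rho ^ pred (m k)) by (apply pow_incr; split; [apply Cmod_ge_0|auto]).
  assert (0 <= Cmod z ^ pred (m k)) by (apply pow_le, Cmod_ge_0).
  assert (rho ^ pred (m k) <= 2 * rho ^ m k).
  { pose proof (Hm k). destruct (m k) as [|n]. lia. simpl pred.
    replace (rho ^ S n) with (rho * rho ^ n) by (simpl; ring).
    assert (0 <= rho ^ n) by (apply pow_le; lra). nra. }
  pose proof (Rabs_pos (c k)).
  assert (0 <= rho ^ m k) by (apply pow_le; lra).
  assert (Cmod z ^ pred (m k) <= 2 * rho ^ m k) by lra.
  assert (INR (m k) <= INR (m k) ^ 2) by nra.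
  assert (G5 : Rabs (c k) * INR (m k) * Cmod z ^ pred (m k) <= Rabs (c k) * INR (m k) * (2 * rho ^ m k)).
  { apply Rmult_le_compat_l; auto. apply Rmult_le_pos; lra. }
  assert (G6 : Rabs (c k) * INR (m k) * (2 * rho ^ m k) <= Rabs (c k) * INR (m k) ^ 2 * (2 * rho ^ m k)).
  { apply Rmult_le_compat_r. lra. apply Rmult_le_compat_l; lra. }
  lra.
Qed.

Lemma term_conv z : Cmod z < 1 -> is_series (term z) (GF z).
Proof.
  intros Hz. destruct (HB (Cmod z)) as [B HBk]. split; [apply Cmod_ge_0|auto].
  destruct (ex_series_C (term z) (fun k => B * (1/2)^k)) as [l Hl].
  - intro k. eapply Rle_trans. apply term_bound with (rho := Cmod z). apply Cmod_ge_0. lra. apply HBk.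
  - eexists. apply geom_half_scal.
  - unfold GF. rewrite (CS_correct _ l Hl). exact Hl.
Qed.

Lemma dterm_conv z : Cmod z < 1 -> is_series (dterm z) (GF' z).
Proof.
  intros Hz. set (rho := Rmax (1/2) (Cmod z)).
  assert (Hr1 : 1/2 <= rho) by apply Rmax_l.
  assert (Hr2 : Cmod z <= rho) by apply Rmax_r.
  assert (Hr3 : rho < 1) by (apply Rmax_lub_lt; lra).
  destruct (HB rho) as [B HBk]. lra.
  destruct (ex_series_C (dterm z) (fun k => 2 * (B * (1/2)^k))) as [l Hl].
  - intro k. eapply Rle_trans. apply dterm_bound with (rho := rho); auto.
    specialize (HBk k). lra.
  - eexists. apply (is_series_scal_l (K := R_AbsRing) (V := R_NormedModule)). apply geom_half_scal.
  - unfold GF'. rewrite (CS_correct _ l Hl). exact Hl.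
Qed.

Lemma GF_derive z : Cmod z < 1 -> @is_derive C_AbsRing C_NormedModule GF z (GF' z).
Proof.
  intros Hz. unfold is_derive. split.
  { apply is_linear_scal_l. }
  intros x Hx. pose proof (is_filter_lim_locally_unique (K:=C_AbsRing) (V:=AbsRing_NormedModule C_AbsRing) z x Hx) as Hx2. subst x.
  intros eps.
  set (rho := (1 + Cmod z) / 2).
  assert (Hr1 : 1/2 <= rho) by (unfold rho; pose proof (Cmod_ge_0 z); lra).
  assert (Hr3 : rho < 1) by (unfold rho; lra).
  destruct (HB rho) as [B HBk]. lra.
  assert (HB0 : 0 <= B).
  { apply (B_nonneg B rho). lra. exact HBk. }
  assert (Hd : 0 < Rmin ((1 - Cmod z) / 2) (eps / (8 * B + 1))).
  { apply Rmin_glb_lt. lra. apply Rdiv_lt_0_compat. apply cond_pos. lra. }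
  eapply filter_imp; [|apply (locally_ball_norm (K:=C_AbsRing) (V:=AbsRing_NormedModule C_AbsRing) z (mkposreal _ Hd))].
  intros y Hy. unfold ball_norm in Hy. simpl in Hy.
  change (Cmod (y - z)%C < Rmin ((1 - Cmod z) / 2) (eps / (8 * B + 1))) in Hy.
  assert (Hy1 : Cmod (y - z)%C < (1 - Cmod z) / 2) by (eapply Rlt_le_trans; [apply Hy|apply Rmin_l]).
  assert (Hy2 : Cmod (y - z)%C < eps / (8 * B + 1)) by (eapply Rlt_le_trans; [apply Hy|apply Rmin_r]).
  assert (Hyr : Cmod y <= rho).
  { replace y with ((y - z) + z)%C by ring. eapply Rle_trans. apply Cmod_triangle. unfold rho. lra. }
  assert (Hzr : Cmod z <= rho) by (unfold rho; lra).
  assert (Hyc : Cmod y < 1) by lra.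
  assert (HS : is_series (fun k => (term y k - term z k - (y - z) * dterm z k)%C)
                 (GF y - GF z - (y - z) * GF' z)%C).
  { apply (is_series_minus (K := C_AbsRing) (V := C_NormedModule)).
    apply (is_series_minus (K := C_AbsRing) (V := C_NormedModule)).
    apply term_conv; auto. apply term_conv; auto.
    apply (is_series_scal_l (K := C_AbsRing) (V := C_NormedModule)). apply dterm_conv; auto. }
  set (d := Cmod (y - z)%C) in *.
  assert (Hd0 : 0 <= d) by apply Cmod_ge_0.
  pose proof (series_norm_le _ (fun k => 4 * d ^ 2 * (B * (1/2) ^ k)) _ (4 * d ^ 2 * (B * 2)) HS) as HN.
  change (Cmod (GF y - GF z - (y - z) * GF' z)%C <= eps * d).
  eapply Rle_trans. apply HN.
  - intro k. unfold term, dterm.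
    replace (c k * cp y (m k) - c k * cp z (m k) - (y - z) * ((c k * INR (m k))%R * cp z (pred (m k))))%C
      with (c k * (cp y (m k) - cp z (m k) - INR (m k) * cp z (pred (m k)) * (y - z)))%C
      by (rewrite RtoC_mult; ring).
    rewrite Cmod_mult, Cmod_R.
    eapply Rle_trans. apply Rmult_le_compat_l. apply Rabs_pos.
    apply cp_diff_bound' with (rho := rho); auto.
    specialize (HBk k). fold d.
    assert (0 <= d ^ 2) by (apply pow_le; auto).
    nra.
  - apply (is_series_scal_l (K := R_AbsRing) (V := R_NormedModule)). apply geom_half_scal.
  - change (norm (minus y z)) with d.
    assert (d * (8 * B + 1) <= eps).
    { apply Rlt_le in Hy2. apply Rle_div_r in Hy2; [|lra]. lra. }
    assert (d * (8 * B) * d <= eps * d) by nra.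
    nra.
Qed.

End GD.

Lemma bernoulli (x : R) (n : nat) : -1 <= x -> 1 + INR n * x <= (1 + x) ^ n.
Proof.
  intro Hx. induction n.
  - simpl. lra.
  - rewrite S_INR. simpl pow.
    assert (0 <= INR n * x * x) by (pose proof (pos_INR n); nra).
    nra.
Qed.

Lemma n_pow_bound (t : R) (n : nat) : 0 <= t < 1 -> INR n * t ^ n * (1 - t) <= 1.
Proof.
  intros Ht. destruct (Req_dec t 0) as [->|Ht0].
  - destruct n. simpl. lra. rewrite pow_i by lia. lra.
  - assert (0 < t) by lra.
    pose proof (bernoulli (/ t - 1) n) as HB.
    assert (1 <= / t) by (rewrite <- Rinv_1; apply Rinv_le_contravar; lra).
    replace (1 + (/ t - 1)) with (/ t) in HB by ring.
    assert (0 < t ^ n) by (apply pow_lt; lra).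
    assert (Hm : t ^ n * (1 + INR n * (/ t - 1)) <= 1).
    { assert (E1 : t ^ n * (/ t) ^ n = 1) by (rewrite pow_inv; field; lra).
      eapply Rle_trans; [|right; exact E1].
      apply Rmult_le_compat_l. lra. apply HB. assert (0 < / t) by (apply Rinv_0_lt_compat; lra). lra. }
    pose proof (pos_INR n).
    assert (INR n * t ^ n * (1 - t) <= INR n * t ^ n * (/ t - 1)).
    { apply Rmult_le_compat_l. nra.
      assert (1 - t <= (1 - t) / t).
      { apply Rmult_le_reg_r with t; [lra|]. field_simplify; nra. }
      unfold Rdiv in *. replace ((1 - t) * / t) with (/ t - 1) in * by (field; lra). lra. }
    assert (0 <= t ^ n) by lra. nra.
Qed.

Lemma poly3_bound (rho : R) : 0 <= rho < 1 ->
  exists C, 0 <= C /\ forall n, INR n ^ 3 * rho ^ n <= C.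
Proof.
  intros Hr. set (t := sqrt (sqrt rho)).
  assert (Ht0 : 0 <= t) by apply sqrt_pos.
  assert (Ht4 : t ^ 4 = rho).
  { unfold t. replace 4%nat with (2 * 2)%nat by reflexivity. rewrite pow_mult.
    rewrite pow2_sqrt by apply sqrt_pos. rewrite pow2_sqrt; lra. }
  assert (Ht1 : t < 1).
  { destruct (Rlt_or_le t 1); auto. assert (1 <= t ^ 4) by (apply pow_R1_Rle; lra). lra. }
  exists ((/ (1 - t)) ^ 4). split. apply pow_le. apply Rlt_le, Rinv_0_lt_compat; lra.
  intro n.
  pose proof (n_pow_bound t n (conj Ht0 Ht1)) as Hn.
  assert (Hn' : INR n * t ^ n <= / (1 - t)).
  { apply Rmult_le_reg_r with (1 - t). lra. rewrite Rinv_l by lra. exact Hn. }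
  assert (0 <= INR n * t ^ n) by (apply Rmult_le_pos; [apply pos_INR| apply pow_le; lra]).
  assert (H4 : (INR n * t ^ n) ^ 4 <= (/ (1 - t)) ^ 4) by (apply pow_incr; lra).
  rewrite Rpow_mult_distr, <- pow_mult in H4.
  rewrite <- Ht4, <- pow_mult.
  replace (n * 4)%nat with (4 * n)%nat in H4 by lia.
  assert (INR n ^ 3 <= INR n ^ 4).
  { destruct n. simpl. lra. pose proof (le_INR 1 (S n) ltac:(lia)) as G1.
    change (INR 1) with 1 in G1.
    assert (0 <= INR (S n) ^ 3) by (apply pow_le; lra).
    replace (INR (S n) ^ 4) with (INR (S n) ^ 3 * INR (S n)) by ring. nra. }
  assert (0 <= t ^ (4 * n)) by (apply pow_le; lra).
  nra.
Qed.

Definition ca (k : nat) : R := / 2 ^ (k * k + 2).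
Definition NN (k : nat) : nat := (2 ^ (k * k * k + 1))%nat.
Definition ca' (k : nat) : R := ca k * INR (NN k).
Definition NN' (k : nat) : nat := pred (NN k).

Lemma NN_ge2 k : (2 <= NN k)%nat.
Proof. unfold NN. pose proof (Nat.pow_nonzero 2 (k*k*k) ltac:(lia)). rewrite Nat.pow_add_r. rewrite Nat.pow_1_r. lia. Qed.

Lemma INR_NN k : INR (NN k) = 2 ^ (k * k * k + 1).
Proof. unfold NN. rewrite pow_INR. f_equal. Qed.

Lemma ca_pos k : 0 < ca k.
Proof. unfold ca. apply Rinv_0_lt_compat, pow_lt. lra. Qed.

Lemma ca_le k : ca k <= / 4 * (1/2) ^ k.
Proof.
  unfold ca. rewrite pow_add. replace (1/2) with (/2) by field. rewrite pow_inv.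
  replace (2 ^ 2) with 4 by ring. rewrite Rinv_mult.
  rewrite Rmult_comm. apply Rmult_le_compat_l. lra.
  apply Rinv_le_contravar. apply pow_lt; lra. apply Rle_pow. lra. nia.
Qed.

Lemma HB_main rho : 0 <= rho < 1 -> exists B, forall k,
  Rabs (ca k) * INR (NN k) ^ 2 * rho ^ (NN k) <= B * (1/2) ^ k.
Proof.
  intros Hr. destruct (poly3_bound rho Hr) as [C [HC0 HC]].
  exists (/ 4 * C). intro k. rewrite Rabs_right by (apply Rle_ge, Rlt_le, ca_pos).
  pose proof (ca_le k). pose proof (ca_pos k). specialize (HC (NN k)).
  assert (1 <= INR (NN k)) by (apply (le_INR 1); pose proof (NN_ge2 k); lia).
  assert (0 <= rho ^ NN k) by (apply pow_le; lra).
  assert (INR (NN k) ^ 2 * rho ^ NN k <= C).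
  { eapply Rle_trans; [|exact HC]. apply Rmult_le_compat_r; auto. simpl. nra. }
  assert (0 <= INR (NN k) ^ 2 * rho ^ NN k) by (apply Rmult_le_pos; auto; apply pow_le; lra).
  assert (0 <= (1/2) ^ k) by (apply pow_le; lra).
  replace (/ 4 * C * (1 / 2) ^ k) with (/ 4 * (1/2) ^ k * C) by ring.
  rewrite Rmult_assoc. apply Rmult_le_compat; lra.
Qed.

Lemma HB_der rho : 0 <= rho < 1 -> exists B, forall k,
  Rabs (ca' k) * INR (NN' k) ^ 2 * rho ^ (NN' k) <= B * (1/2) ^ k.
Proof.
  intros Hr. destruct (poly3_bound rho Hr) as [C [HC0 HC]].
  exists (/ 2 * C). intro k. unfold ca'.
  rewrite Rabs_right by (apply Rle_ge, Rmult_le_pos; [apply Rlt_le, ca_pos|apply pos_INR]).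
  pose proof (ca_le k). pose proof (ca_pos k). specialize (HC (NN' k)).
  pose proof (NN_ge2 k).
  assert (HN : INR (NN k) = INR (NN' k) + 1).
  { unfold NN'. rewrite <- S_INR. f_equal. lia. }
  assert (1 <= INR (NN' k)) by (apply (le_INR 1); unfold NN'; lia).
  assert (0 <= rho ^ NN' k) by (apply pow_le; lra).
  assert (INR (NN k) * INR (NN' k) ^ 2 * rho ^ NN' k <= 2 * C).
  { rewrite HN. assert ((INR (NN' k) + 1) * INR (NN' k) ^ 2 <= 2 * INR (NN' k) ^ 3) by (simpl; nra).
    assert (0 <= rho ^ NN' k) by auto. nra. }
  assert (0 <= INR (NN k) * INR (NN' k) ^ 2 * rho ^ NN' k).
  { apply Rmult_le_pos; auto. apply Rmult_le_pos. apply pos_INR. apply pow_le, pos_INR. }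
  assert (0 <= (1/2) ^ k) by (apply pow_le; lra).
  replace (ca k * INR (NN k) * INR (NN' k) ^ 2 * rho ^ NN' k)
    with (ca k * (INR (NN k) * INR (NN' k) ^ 2 * rho ^ NN' k)) by ring.
  replace (/ 2 * C * (1 / 2) ^ k) with (/ 4 * (1/2) ^ k * (2 * C)) by field.
  apply Rmult_le_compat; lra.
Qed.

Lemma NN_ge1 k : (1 <= NN k)%nat.
Proof. pose proof (NN_ge2 k). lia. Qed.
Lemma NN'_ge1 k : (1 <= NN' k)%nat.
Proof. pose proof (NN_ge2 k). unfold NN'. lia. Qed.

Definition hh (z : C) : C := GF ca NN z.
Definition dh (z : C) : C := GF' ca NN z.
Definition ddh (z : C) : C := GF' ca' NN' z.

Lemma dh_eq z : dh z = GF ca' NN' z.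
Proof. reflexivity. Qed.

Lemma hh_derive z : Cmod z < 1 -> @is_derive C_AbsRing C_NormedModule hh z (dh z).
Proof. intro Hz. apply GF_derive; auto. apply NN_ge1. apply HB_main. Qed.

Lemma dh_derive z : Cmod z < 1 -> @is_derive C_AbsRing C_NormedModule dh z (ddh z).
Proof. intro Hz. apply (GF_derive ca' NN'); auto. apply NN'_ge1. apply HB_der. Qed.

Definition pp (z : C) : C := Cplus (RtoC 1) (hh z).

Lemma pp_derive z : Cmod z < 1 -> @is_derive C_AbsRing C_NormedModule pp z (dh z).
Proof.
  intro Hz.
  apply (is_derive_ext (fun x => @plus C_NormedModule (RtoC 1) (hh x))). reflexivity.
  replace (dh z) with (@plus C_NormedModule zero (dh z)).
  apply is_derive_plus. apply is_derive_const. apply hh_derive; auto.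
  apply (plus_zero_l (G := C_AbelianGroup)).
Qed.

Lemma hh_bound z : Cmod z < 1 -> Cmod (hh z) <= 1/2.
Proof.
  intro Hz. replace (1/2) with (/4 * 2) by field.
  apply (series_norm_le (term ca NN z) (fun k => / 4 * (1/2) ^ k)).
  apply term_conv. apply NN_ge1. apply HB_main. auto.
  - intro k. unfold term. rewrite Cmod_mult, Cmod_R, Cmod_cp.
    rewrite Rabs_right by (apply Rle_ge, Rlt_le, ca_pos).
    pose proof (ca_le k). pose proof (ca_pos k).
    assert (Cmod z ^ NN k <= 1) by (rewrite <- (pow1 (NN k)); apply pow_incr; split; [apply Cmod_ge_0|lra]).
    assert (0 <= Cmod z ^ NN k) by (apply pow_le, Cmod_ge_0). nra.
  - apply geom_half_scal.
Qed.

Lemma pp_re z : Cmod z < 1 -> 1/2 <= Re (pp z).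
Proof.
  intro Hz. pose proof (hh_bound z Hz). pose proof (re_le_Cmod (hh z)).
  unfold pp. apply Rabs_le_between in H0. unfold Re in *. change (fst (RtoC 1 + hh z)%C) with (1 + fst (hh z)). lra.
Qed.

Lemma p2frac (A B C D : nat) : (A + D <= C + B)%nat -> 2 ^ A * / 2 ^ B <= 2 ^ C * / 2 ^ D.
Proof.
  intro H. assert (0 < 2 ^ B) by (apply pow_lt; lra). assert (0 < 2 ^ D) by (apply pow_lt; lra).
  apply Rmult_le_reg_r with (2 ^ B * 2 ^ D). nra.
  replace (2 ^ A * / 2 ^ B * (2 ^ B * 2 ^ D)) with (2 ^ (A + D)) by (rewrite pow_add; field; lra).
  replace (2 ^ C * / 2 ^ D * (2 ^ B * 2 ^ D)) with (2 ^ (C + B)) by (rewrite pow_add; field; lra).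
  apply Rle_pow. lra. exact H.
Qed.

Lemma ca'_eq k : ca' k = 2 ^ (k*k*k+1) * / 2 ^ (k*k+2).
Proof. unfold ca', ca. rewrite INR_NN. ring. Qed.

Lemma bj_eq j k : ca' j / 8 * (1/2) ^ k = 2 ^ (j*j*j+1) * / 2 ^ (j*j+2+3+k).
Proof.
  rewrite ca'_eq. rewrite !pow_add. replace (1/2) with (/2) by field. rewrite pow_inv.
  replace (2 ^ 3) with 8 by ring. field. split; apply pow_nonzero; lra.
Qed.

Lemma small_k j k : (4 <= j)%nat -> (k < j)%nat -> ca' k <= ca' j / 8 * (1/2) ^ k.
Proof.
  intros. rewrite bj_eq, ca'_eq. apply p2frac.
  assert (exists d, j = (k + 1 + d)%nat) as [d ->] by (exists (j - k - 1)%nat; lia). nia.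
Qed.

Lemma large_k j k : (4 <= j)%nat -> (j < k)%nat -> ca k * (2 * INR (NN j)) <= ca' j / 8 * (1/2) ^ k.
Proof.
  intros. rewrite bj_eq. unfold ca. rewrite INR_NN.
  assert (2 ^ (1 + (j*j*j+1)) * / 2 ^ (k*k+2) <= 2 ^ (j*j*j+1) * / 2 ^ (j*j+2+3+k)).
  { apply p2frac. nia. }
  rewrite pow_add in H1. simpl pow in H1 at 1. lra.
Qed.

Lemma sum_n_indicator (v : C) j N :
  sum_n (fun k => if Nat.eqb k j then v else RtoC 0) N = if Nat.leb j N then v else RtoC 0.
Proof.
  induction N.
  - rewrite sum_O. destruct j; reflexivity.
  - rewrite sum_Sn, IHN.
    destruct (Nat.eqb_spec (S N) j) as [E1|E1]; destruct (Nat.leb_spec j N) as [E2|E2];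
    destruct (Nat.leb_spec j (S N)) as [E3|E3]; try lia.
    + apply (plus_zero_l (G := C_AbelianMonoid)).
    + apply (plus_zero_r (G := C_AbelianMonoid)).
    + apply (plus_zero_r (G := C_AbelianMonoid)).
Qed.

Lemma is_series_indicator (v : C) j :
  is_series (fun k => if Nat.eqb k j then v else RtoC 0) v.
Proof.
  unfold is_series.
  apply (filterlim_ext_loc (fun _ => v)).
  - exists j. intros N HN. rewrite sum_n_indicator. apply Nat.leb_le in HN. rewrite HN. reflexivity.
  - apply filterlim_const.
Qed.

Lemma dominant (u : nat -> C) S j (b : nat -> R) L :
  is_series u S -> (forall k, 0 <= b k) -> (forall k, k <> j -> Cmod (u k) <= b k) ->
  is_series b L -> Cmod (S - u j)%C <= L.
Proof.
  intros Hu Hb0 Hb HL.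
  pose proof (is_series_minus (K := C_AbsRing) (V := C_NormedModule) _ _ _ _ Hu (is_series_indicator (u j) j)) as H.
  apply (series_norm_le _ b _ L H); auto.
  intro k.
  destruct (Nat.eqb k j) eqn:E.
  - apply Nat.eqb_eq in E. subst. change (Cmod (u j - u j)%C <= b j).
    replace (u j - u j)%C with (RtoC 0) by ring. rewrite Cmod_R, Rabs_R0. auto.
  - apply Nat.eqb_neq in E. change (Cmod (u k - 0)%C <= b k).
    replace (u k - 0)%C with (u k) by ring. auto.
Qed.

Definition rj (j : nat) : R := 1 - / (2 * INR (NN j)).

Lemma rj_bounds j : 3/4 <= rj j < 1.
Proof.
  unfold rj. assert (2 <= INR (NN j)) by (apply (le_INR 2); apply NN_ge2).
  assert (0 < / (2 * INR (NN j))) by (apply Rinv_0_lt_compat; lra).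
  assert (/ (2 * INR (NN j)) <= / 4) by (apply Rinv_le_contravar; lra).
  lra.
Qed.

Lemma rj_pow j : 1/2 <= rj j ^ NN j.
Proof.
  unfold rj. assert (2 <= INR (NN j)) by (apply (le_INR 2); apply NN_ge2).
  assert (/ (2 * INR (NN j)) <= / 4) by (apply Rinv_le_contravar; lra).
  pose proof (bernoulli (- / (2 * INR (NN j))) (NN j)).
  replace (1 + INR (NN j) * - / (2 * INR (NN j))) with (1/2) in H1 by (field; lra).
  replace (1 - / (2 * INR (NN j))) with (1 + - / (2 * INR (NN j))) by ring.
  apply H1. lra.
Qed.

Lemma rj_npow j n : INR n * rj j ^ n <= 2 * INR (NN j).
Proof.
  pose proof (rj_bounds j). pose proof (n_pow_bound (rj j) n ltac:(lra)).
  assert (2 <= INR (NN j)) by (apply (le_INR 2); apply NN_ge2).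
  replace (1 - rj j) with (/ (2 * INR (NN j))) in H0 by (unfold rj; ring).
  apply Rmult_le_reg_r with (/ (2 * INR (NN j))). apply Rinv_0_lt_compat; lra.
  rewrite Rinv_r by lra. exact H0.
Qed.

Definition uu (z : C) (k : nat) : C := Cmult (RtoC (ca' k)) (cp z (NN k)).

Lemma zdh_series z : Cmod z < 1 -> is_series (uu z) (Cmult z (dh z)).
Proof.
  intro Hz.
  pose proof (is_series_scal_l (K := C_AbsRing) (V := C_NormedModule) z _ _ (dterm_conv ca NN NN_ge1 HB_main z Hz)) as H.
  eapply is_series_ext; [|exact H].
  intro k. change (@scal C_AbsRing C_NormedModule) with Cmult. unfold dterm, uu, ca'.
  pose proof (NN_ge1 k). destruct (NN k) as [|n] eqn:E. lia. simpl pred. simpl cp. match goal with |- ?a = ?b => change (@eq C a b) end; ring.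
Qed.

Lemma lower_zdh j z : (4 <= j)%nat -> Cmod z = rj j -> ca' j / 4 <= Cmod (Cmult z (dh z)).
Proof.
  intros Hj Hz. pose proof (rj_bounds j).
  assert (Hz1 : Cmod z < 1) by lra.
  pose proof (dominant (uu z) _ j (fun k => ca' j / 8 * (1/2) ^ k) (ca' j / 8 * 2) (zdh_series z Hz1)) as D.
  assert (Hca' : forall k, 0 < ca' k).
  { intro k. unfold ca'. apply Rmult_lt_0_compat. apply ca_pos. apply (lt_INR 0). pose proof (NN_ge1 k); lia. }
  assert (Hu : forall k, Cmod (uu z k) = ca' k * rj j ^ NN k).
  { intro k. unfold uu. rewrite Cmod_mult, Cmod_R, Cmod_cp, Hz. rewrite Rabs_right. reflexivity. apply Rle_ge, Rlt_le, Hca'. }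
  assert (Cmod (Cmult z (dh z) - uu z j)%C <= ca' j / 8 * 2).
  { apply D.
    - intro k. pose proof (Hca' j). assert (0 <= (1/2)^k) by (apply pow_le; lra). nra.
    - intros k Hk. rewrite Hu. destruct (Nat.lt_ge_cases k j) as [Hlt|Hge].
      + eapply Rle_trans; [|apply small_k; auto].
        pose proof (Hca' k). assert (rj j ^ NN k <= 1) by (rewrite <- (pow1 (NN k)); apply pow_incr; lra). nra.
      + assert (Hgt : (j < k)%nat) by lia.
        eapply Rle_trans; [|apply large_k; auto].
        unfold ca'. rewrite Rmult_assoc. apply Rmult_le_compat_l. apply Rlt_le, ca_pos. apply rj_npow.
    - apply geom_half_scal. }
  pose proof (Hu j). pose proof (rj_pow j). pose proof (Hca' j).
  assert (Cmod (uu z j) <= Cmod (Cmult z (dh z)) + Cmod (Cmult z (dh z) - uu z j)%C).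
  { replace (uu z j) with (Cmult z (dh z) - (Cmult z (dh z) - uu z j))%C at 1 by ring.
    eapply Rle_trans. apply Cmod_triangle. rewrite Cmod_opp. lra. }
  nra.
Qed.

Lemma Cmod_polar r t : 0 <= r -> Cmod (polar r t) = r.
Proof.
  intro Hr. unfold polar, Cmod. simpl fst. simpl snd.
  replace ((r * cos t) ^ 2 + (r * sin t) ^ 2) with (r ^ 2) by (pose proof (sin2_cos2 t); unfold Rsqr in *; nra).
  apply sqrt_pow2; auto.
Qed.

Lemma polar_cont r t : continuous (polar r) t.
Proof.
  unfold polar.
  apply (continuous_comp_2 (fun t => r * cos t) (fun t => r * sin t) (fun a b => (a, b))).
  - apply (continuous_mult (K := R_AbsRing) (fun _ => r) cos). apply continuous_const. apply continuous_cos.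
  - apply (continuous_mult (K := R_AbsRing) (fun _ => r) sin). apply continuous_const. apply continuous_sin.
  - apply (continuous_ext (fun x => x)). intro x; destruct x; reflexivity. apply continuous_id.
Qed.

Lemma cont_from_derive (f : C -> C) (df : C) z :
  @is_derive C_AbsRing C_NormedModule f z df -> @continuous C_UniformSpace C_UniformSpace f z.
Proof.
  intro H.
  assert (H1 : filterlim f (@locally (AbsRing_UniformSpace C_AbsRing) z) (locally (f z))).
  { apply (@filterdiff_continuous_aux C_AbsRing (AbsRing_NormedModule C_AbsRing) C_NormedModule (locally z)).
    exact (@filter_filter _ _ (locally_filter (T := AbsRing_UniformSpace C_AbsRing) z)).
    exists (fun y => scal y df). exact H.
    intros P HP. exact HP. }
  eapply filterlim_filter_le_1; [|exact H1].
  intros P HP. apply (locally_le_locally_norm (K := C_AbsRing) (V := C_NormedModule)) in HP.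
  exact HP.
Qed.

Lemma dh_cont z : Cmod z < 1 -> continuous dh z.
Proof. intro Hz. apply (cont_from_derive _ _ _ (dh_derive z Hz)). Qed.

Lemma pp_cont z : Cmod z < 1 -> continuous pp z.
Proof. intro Hz. apply (cont_from_derive _ _ _ (pp_derive z Hz)). Qed.

Lemma pp_nonzero z : Cmod z < 1 -> pp z <> RtoC 0.
Proof.
  intros Hz E. pose proof (pp_re z Hz). rewrite E in H. simpl in H. lra.
Qed.

Lemma pp_Cmod_pos z : Cmod z < 1 -> 1/2 <= Cmod (pp z).
Proof.
  intros Hz. pose proof (pp_re z Hz). pose proof (re_le_Cmod (pp z)).
  apply Rabs_le_between in H0. lra.
Qed.

Lemma pp_Cmod_le z : Cmod z < 1 -> Cmod (pp z) <= 3/2.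
Proof.
  intros Hz. unfold pp. eapply Rle_trans. apply Cmod_triangle.
  rewrite Cmod_R, Rabs_R1. pose proof (hh_bound z Hz). lra.
Qed.

Definition integrand (r t : R) : R :=
  (Cmod (Cdiv (Cmult (polar r t) (dh (polar r t))) (pp (polar r t)))) ^ 2.

Lemma integrand_eq r t : 0 <= r < 1 ->
  integrand r t = (r * Cmod (dh (polar r t)) * / Cmod (pp (polar r t))) ^ 2.
Proof.
  intros Hr. unfold integrand. rewrite Cmod_div. rewrite Cmod_mult, Cmod_polar by lra. reflexivity.
  apply pp_nonzero. rewrite Cmod_polar; lra.
Qed.

Lemma cmod_comp_cont (f : C -> C) r t : (forall z, Cmod z < 1 -> continuous f z) -> 0 <= r < 1 ->
  continuous (fun t => Cmod (f (polar r t))) t.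
Proof.
  intros Hf Hr.
  apply (continuous_comp (fun t => f (polar r t)) Cmod).
  apply (continuous_comp (polar r) f). apply polar_cont. apply Hf. rewrite Cmod_polar; lra.
  apply (filterlim_norm (K := C_AbsRing) (V := C_NormedModule)).
Qed.

Lemma integrand_cont r t : 0 <= r < 1 -> continuous (integrand r) t.
Proof.
  intros Hr.
  apply (continuous_ext (fun t => (r * Cmod (dh (polar r t)) * / Cmod (pp (polar r t))) ^ 2)).
  { intro x. symmetry. apply integrand_eq; auto. }
  apply (continuous_ext (fun t => (r * Cmod (dh (polar r t)) * / Cmod (pp (polar r t))) * ((r * Cmod (dh (polar r t)) * / Cmod (pp (polar r t))) * 1))).
  { intro x. simpl. reflexivity. }
  assert (C1 : continuous (fun t => r * Cmod (dh (polar r t)) * / Cmod (pp (polar r t))) t).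
  { apply (continuous_mult (K := R_AbsRing) (fun t => r * Cmod (dh (polar r t))) (fun t => / Cmod (pp (polar r t)))).
    apply (continuous_mult (K := R_AbsRing) (fun _ => r) (fun t => Cmod (dh (polar r t)))).
    apply continuous_const. apply cmod_comp_cont; auto. apply dh_cont.
    apply continuous_Rinv_comp. apply cmod_comp_cont; auto. apply pp_cont.
    pose proof (pp_Cmod_pos (polar r t)). rewrite Cmod_polar in H by lra. specialize (H ltac:(lra)). lra. }
  apply (continuous_mult (K := R_AbsRing)). exact C1.
  apply (continuous_mult (K := R_AbsRing)). exact C1. apply continuous_const.
Qed.

Lemma integrand_lower j t : (4 <= j)%nat -> (ca' j / 6) ^ 2 <= integrand (rj j) t.
Proof.
  intros Hj. pose proof (rj_bounds j).
  assert (Hz : Cmod (polar (rj j) t) = rj j) by (apply Cmod_polar; lra).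
  assert (Hz1 : Cmod (polar (rj j) t) < 1) by lra.
  unfold integrand. rewrite Cmod_div by (apply pp_nonzero; auto).
  pose proof (lower_zdh j _ Hj Hz). pose proof (pp_Cmod_pos _ Hz1). pose proof (pp_Cmod_le _ Hz1).
  assert (Hca : 0 < ca' j).
  { unfold ca'. apply Rmult_lt_0_compat. apply ca_pos. apply (lt_INR 0). pose proof (NN_ge1 j); lia. }
  set (a := Cmod (Cmult (polar (rj j) t) (dh (polar (rj j) t)))) in *.
  set (b := Cmod (pp (polar (rj j) t))) in *.
  assert (ca' j / 6 <= a / b).
  { apply Rmult_le_reg_r with b. lra. replace (a / b * b) with a by (field; lra). nra. }
  apply pow_incr. split; lra.
Qed.

Lemma I_lower j : (4 <= j)%nat -> 2 * PI * (ca' j / 6) ^ 2 <= I_int pp dh (rj j).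
Proof.
  intros Hj. pose proof (rj_bounds j).
  unfold I_int. fold (integrand (rj j)).
  replace (2 * PI * (ca' j / 6) ^ 2) with (RInt (fun _ => (ca' j / 6) ^ 2) 0 (2 * PI)).
  2:{ rewrite RInt_const. change (@eq R ((2 * PI - 0) * (ca' j / 6) ^ 2) (2 * PI * (ca' j / 6) ^ 2)). ring. }
  apply RInt_le. pose proof PI_RGT_0; lra.
  apply ex_RInt_const.
  apply (ex_RInt_continuous (V := R_CompleteNormedModule)). intros. apply integrand_cont. lra.
  intros. apply integrand_lower; auto.
Qed.

Lemma nat_above M : exists j : nat, M <= INR j.
Proof.
  destruct (archimed M) as [H1 _].
  destruct (Z_lt_le_dec (up M) 0) as [Hn|Hp].
  - exists 0%nat. simpl. apply IZR_lt in Hn. lra.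
  - exists (Z.to_nat (up M)). rewrite INR_IZR_INZ, Z2Nat.id by exact Hp. lra.
Qed.

Lemma pow2_exp n : 2 ^ n = exp (INR n * ln 2).
Proof. rewrite <- Rpower_pow by lra. reflexivity. Qed.

Lemma key_ineq (beta K : R) (j : nat) : beta < 2 ->
  4 <= INR j -> 4 <= (2 - beta) * INR j -> 6 * K <= INR j ->
  K * Rpower (/ 2 ^ (j*j*j+2)) (- beta) < 2 * PI * (ca' j / 6) ^ 2.
Proof.
  intros Hb H4 He HK. set (X := INR j) in *.
  set (L := ln 2). assert (HL : 0 < L) by (unfold L; rewrite <- ln_1; apply ln_increasing; lra).
  assert (HA : INR (j*j*j+1) = X^3 + 1) by (unfold X; rewrite plus_INR, !mult_INR; simpl; ring).
  assert (HB : INR (j*j+2) = X^2 + 2) by (unfold X; rewrite plus_INR, !mult_INR; simpl; ring).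
  assert (HC : INR (j*j*j+2) = X^3 + 2) by (unfold X; rewrite plus_INR, !mult_INR; simpl; ring).
  assert (Hca : ca' j = exp ((X^3 + 1 - (X^2 + 2)) * L)).
  { rewrite ca'_eq, !pow2_exp, HA, HB. rewrite <- exp_Ropp, <- exp_plus. f_equal. fold L. ring. }
  assert (Hrp : Rpower (/ 2 ^ (j*j*j+2)) (- beta) = exp (beta * (X^3 + 2) * L)).
  { unfold Rpower. rewrite ln_Rinv by (apply pow_lt; lra). rewrite ln_pow by lra. rewrite HC.
    f_equal. fold L. ring. }
  rewrite Hrp.
  set (E := exp (beta * (X ^ 3 + 2) * L)).
  assert (HE : 0 < E) by apply exp_pos.
  assert (Hsq : (ca' j / 6) ^ 2 = / 36 * exp (X * L) * exp (((2 - beta) * (X^3 + 2) - 2 * X^2 - 6 - X) * L) * E).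
  { rewrite Hca. unfold E.
    assert (Hx : exp ((X ^ 3 + 1 - (X ^ 2 + 2)) * L) * exp ((X ^ 3 + 1 - (X ^ 2 + 2)) * L)
      = exp (X * L) * exp (((2 - beta) * (X ^ 3 + 2) - 2 * X ^ 2 - 6 - X) * L) * exp (beta * (X ^ 3 + 2) * L)).
    { rewrite <- !exp_plus. f_equal. ring. }
    replace (/ 36 * exp (X * L) * exp (((2 - beta) * (X ^ 3 + 2) - 2 * X ^ 2 - 6 - X) * L) * exp (beta * (X ^ 3 + 2) * L)) with (/ 36 * (exp (X * L) * exp (((2 - beta) * (X ^ 3 + 2) - 2 * X ^ 2 - 6 - X) * L) * exp (beta * (X ^ 3 + 2) * L))) by ring. rewrite <- Hx. field. }
  assert (HD : 0 <= ((2 - beta) * (X^3 + 2) - 2 * X^2 - 6 - X)).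
  { assert ((2 - beta) * X ^ 3 >= 4 * X ^ 2).
    { replace ((2 - beta) * X ^ 3) with (((2 - beta) * X) * X ^ 2) by ring.
      assert (0 <= X ^ 2) by (apply pow_le; lra). nra. }
    assert (0 <= (2 - beta) * 2) by lra. simpl in *. nra. }
  assert (HD2 : 1 <= exp (((2 - beta) * (X^3 + 2) - 2 * X^2 - 6 - X) * L)).
  { pose proof (exp_ineq1_le (((2 - beta) * (X^3 + 2) - 2 * X^2 - 6 - X) * L)).
    assert (0 <= ((2 - beta) * (X^3 + 2) - 2 * X^2 - 6 - X) * L) by (apply Rmult_le_pos; lra). lra. }
  assert (HX : 1 + X <= exp (X * L)).
  { unfold X, L. rewrite <- pow2_exp. pose proof (bernoulli 1 j). simpl in *. replace (1+1) with 2 in H by ring. lra. }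
  assert (Hpi : 3 < PI) by (pose proof PI_RGT_0; pose proof PI_4; pose proof (PI2_3_2); lra).
  rewrite Hsq.
  set (Q := exp (((2 - beta) * (X ^ 3 + 2) - 2 * X ^ 2 - 6 - X) * L)) in *.
  set (P := exp (X * L)) in *.
  assert (P <= P * Q) by nra.
  assert (1 + X <= P * Q) by lra.
  assert (2 * PI * (/ 36 * P * Q * E) = PI / 18 * (P * Q) * E) by (field).
  rewrite H1.
  assert (K < PI / 18 * (P * Q)).
  { assert (PI / 18 * (1 + X) <= PI / 18 * (P * Q)) by (apply Rmult_le_compat_l; lra).
    assert (K < PI / 18 * (1 + X)) by nra. lra. }
  apply Rmult_lt_compat_r; auto.
Qed.

Theorem theorem1p2 :
  exists p dp : C -> C,
    holo_on_disc_with p dp /\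
    (forall z : C, in_disc z -> 0 < Re (p z)) /\
    forall beta : R, beta < 2 ->
      ~ bigO_at_1minus (I_int p dp) (fun r => Rpower (1 - r) (- beta)).
Proof.
  exists pp, dh. split; [|split].
  - intros z Hz. apply pp_derive. exact Hz.
  - intros z Hz. pose proof (pp_re z Hz). lra.
  - intros beta Hb [K [r0 [Hr0 HK]]].
    destruct (nat_above (Rmax (Rmax 4 (4 / (2 - beta))) (Rmax (6 * K) (/ (1 - r0))))) as [j Hj].
    assert (Hj1 : 4 <= INR j) by (eapply Rle_trans; [|exact Hj]; eapply Rle_trans; [|apply Rmax_l]; apply Rmax_l).
    assert (Hj2 : 4 / (2 - beta) <= INR j) by (eapply Rle_trans; [|exact Hj]; eapply Rle_trans; [|apply Rmax_l]; apply Rmax_r).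
    assert (Hj3 : 6 * K <= INR j) by (eapply Rle_trans; [|exact Hj]; eapply Rle_trans; [|apply Rmax_r]; apply Rmax_l).
    assert (Hj4 : / (1 - r0) <= INR j) by (eapply Rle_trans; [|exact Hj]; eapply Rle_trans; [|apply Rmax_r]; apply Rmax_r).
    assert (Hj5 : 4 <= (2 - beta) * INR j).
    { apply Rmult_le_compat_l with (r := 2 - beta) in Hj2; [|lra].
      replace ((2 - beta) * (4 / (2 - beta))) with 4 in Hj2 by (field; lra). lra. }
    assert (Hj0 : (4 <= j)%nat).
    { destruct (le_lt_dec 4 j) as [h|h]; auto. apply lt_INR in h. simpl in h. lra. }
    assert (H2N : 2 * INR (NN j) = 2 ^ (j*j*j+2)).
    { rewrite INR_NN. replace (j*j*j+2)%nat with (S (j*j*j+1)) by lia. simpl. ring. }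
    assert (Hrj : 1 - rj j = / 2 ^ (j*j*j+2)) by (unfold rj; rewrite H2N; ring).
    pose proof (rj_bounds j).
    assert (Hr0j : r0 < rj j).
    { assert (G1 : 1 + INR (j*j*j+2) <= 2 ^ (j*j*j+2)).
      { pose proof (bernoulli 1 (j*j*j+2)) as G. replace (1+1) with 2 in G by ring. lra. }
      assert (G2 : INR j <= INR (j*j*j+2)) by (apply le_INR; nia).
      assert (G3 : 0 < 1 - r0) by lra.
      assert (G4 : / (1 - r0) < 2 ^ (j*j*j+2)) by lra.
      assert (G5 : / 2 ^ (j*j*j+2) < 1 - r0).
      { apply Rinv_lt_contravar in G4. rewrite Rinv_inv in G4. lra.
        apply Rmult_lt_0_compat. apply Rinv_0_lt_compat; lra. apply pow_lt; lra. }
      lra. }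
    specialize (HK (rj j) (conj Hr0j (proj2 H))).
    rewrite Hrj in HK.
    pose proof (I_lower j Hj0).
    pose proof (key_ineq beta K j Hb Hj1 Hj5 Hj3).
    lra.
Qed.
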